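(* Let $w=(i,\epsilon)\in\mathcal W_0(d)$ and $\tau=\tau(w)$. Then $d$ is even and: (1) $\mathrm{NF}(w)=(x_{j(1)},\dots,x_{j(d/2)},x_{j(d/2)}^{-1},\dots,x_{j(1)}^{-1})$ for some $j:[d/2]\to\mathbb N_0$ with $j(l)+p-1\ge j(l+1)$ for $1\le l\le d/2-1$, and $-d(p-1)/2\le j(l)-i(\tau^{-1}(l))\le d(p-1)/2$ for all $l\in[d/2]$; (2) for every $k\in[d/2]$, $|i(\tau^{-1}(k))-i(\tau^{-1}(d-k+1))|\le d(p-1)$.
   Context: Fix an integer $p\ge2$; $F_p=\langle x_0,x_1,\dots\mid x_nx_k=x_kx_{n+p-1}\ \forall k<n\rangle$ with identity $e$. For $d\in\mathbb N$ and $[d]=\{1,\dots,d\}$, a word of length $d$ is a tuple $w=(x_{i(1)}^{\epsilon(1)},\dots,x_{i(d)}^{\epsilon(d)})$ with $i:[d]\to\mathbb N_0$, $\epsilon:[d]\to\{1,-1\}$, written $w=(i,\epsilon)$; $\mathrm{eval}(w)=x_{i(1)}^{\epsilon(1)}\cdots x_{i(d)}^{\epsilon(d)}$; $\mathcal W(d)$ is the set of words of length $d$ and $\mathcal W_0(d)=\{w\in\mathcal W(d):\mathrm{eval}(w)=e\}$. Rewriting relations: ($\rightsquigarrow$) a consecutive pair $(x_a^{-1},x_b)$ is replaced by $(x_b,x_{a+p-1}^{-1})$ if $a>b$, by $(x_{b+p-1},x_a^{-1})$ if $a<b$, by $(x_b,x_a^{-1})$ if $a=b$; ($\rightarrowtail$,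 on $\rightsquigarrow$-irreducible words) $(x_a,x_b)$ with $b-p+1>a$ is replaced by $(x_{b-p+1},x_a)$, and $(x_a^{-1},x_b^{-1})$ with $a-p+1>b$ by $(x_b^{-1},x_{a-p+1}^{-1})$. The normal form $\mathrm{NF}(w)$ is obtained by applying $\rightsquigarrow$ until irreducible and then $\rightarrowtail$ until irreducible (well defined). Each step swaps two adjacent letters; $\tau(w)\in S_d$ is defined by letting $\tau(w)(l)$ be the position in $\mathrm{NF}(w)$ of the letter originating from the $l$-th letter of $w$. *)

(* Defs.v *)
From mathcomp Require Import all_boot all_order all_algebra.
Set Implicit Arguments. Unset Strict Implicit. Unset Printing Implicit Defensive.
Import Order.TTheory GRing.Theory Num.Theory.

Record group := Group {
  gcar :> Type;
  gmul : gcar -> gcar -> gcar;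
  ginv : gcar -> gcar;
  gone : gcar;
  gmulA : forall x y z, gmul x (gmul y z) = gmul (gmul x y) z;
  gmul1 : forall x, gmul gone x = x;
  gmulV : forall x, gmul (ginv x) x = gone
}.

(* A word is a list of letters (index, sign); sign true = exponent +1,
   false = exponent -1. *)
Definition gletter (G : group) (x : nat -> G) (a : nat * bool) : G :=
  if a.2 then x a.1 else ginv (x a.1).

Definition geval (G : group) (x : nat -> G) (w : seq (nat * bool)) : G :=
  foldr (fun a g => gmul (gletter x a) g) (gone G) w.

Definition Fp_rel (p : nat) (G : group) (x : nat -> G) : Prop :=
  forall k n, k < n -> gmul (x n) (x k) = gmul (x k) (x (n + p - 1)).

(* eval(w) = e in F_p = <x_0, x_1, ... | x_n x_k = x_k x_{n+p-1} (k<n)>: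
   by the universal property of the presented group, this holds iff the
   word evaluates to the identity in every group under every assignment
   of generators satisfying the defining relations. *)
Definition eval_trivial (p : nat) (w : seq (nat * bool)) : Prop :=
  forall (G : group) (x : nat -> G), Fp_rel p x -> geval x w = gone G.

Definition word (d : nat) (i : nat -> nat) (eps : nat -> bool) : seq (nat * bool) :=
  [seq (i l, eps l) | l <- iota 1 d].

Definition tletter := (nat * bool * nat)%type.

Definition tword (d : nat) (i : nat -> nat) (eps : nat -> bool) : seq tletter :=
  [seq (i l, eps l, l) | l <- iota 1 d].

Inductive rstep1 (p : nat) : seq tletter -> seq tletter -> Prop :=
| R1gt s1 s2 a b oa ob : a > b ->
    rstep1 p (s1 ++ (a, false, oa) :: (b, true, ob) :: s2)
             (s1 ++ (b, true, ob) :: (a + p - 1, false, oa) :: s2)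
| R1lt s1 s2 a b oa ob : a < b ->
    rstep1 p (s1 ++ (a, false, oa) :: (b, true, ob) :: s2)
             (s1 ++ (b + p - 1, true, ob) :: (a, false, oa) :: s2)
| R1eq s1 s2 a oa ob :
    rstep1 p (s1 ++ (a, false, oa) :: (a, true, ob) :: s2)
             (s1 ++ (a, true, ob) :: (a, false, oa) :: s2).

(* The relation >-> . Conditions b - p + 1 > a and a - p + 1 > b are
   written without truncated subtraction. *)
Inductive rstep2 (p : nat) : seq tletter -> seq tletter -> Prop :=
| R2pos s1 s2 a b oa ob : a + p - 1 < b ->
    rstep2 p (s1 ++ (a, true, oa) :: (b, true, ob) :: s2)
             (s1 ++ (b - p + 1, true, ob) :: (a, true, oa) :: s2)
| R2neg s1 s2 a b oa ob : b + p - 1 < a ->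
    rstep2 p (s1 ++ (a, false, oa) :: (b, false, ob) :: s2)
             (s1 ++ (b, false, ob) :: (a - p + 1, false, oa) :: s2).

Inductive star (T : Type) (R : T -> T -> Prop) : T -> T -> Prop :=
| star_refl x : star R x x
| star_step x y z : R x y -> star R y z -> star R x z.

Definition irreducible (T : Type) (R : T -> T -> Prop) (x : T) : Prop :=
  forall y, ~ R x y.

(* v is (a tracked version of) NF(w): obtained by applying ~> until
   irreducible, then >-> until irreducible. *)
Definition NF_run (p : nat) (w v : seq tletter) : Prop :=
  exists u, star (rstep1 p) w u /\ irreducible (rstep1 p) u /\
            star (rstep2 p) u v /\ irreducible (rstep2 p) v.

Definition untrack (v : seq tletter) : seq (nat * bool) := [seq t.1 | t <- v].

(* tau^{-1}(l), l in 1..d: the original position of the l-th letter of NF(w) *)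
Definition tauinv (v : seq tletter) (l : nat) : nat := (nth (0, true, 0) v l.-1).2.

(* Main.v *)
From Pilot Require Import Defs.
From mathcomp Require Import all_boot all_order all_algebra.
From mathcomp Require Import zify.
From Stdlib Require Import FunctionalExtensionality ProofIrrelevance.
Import Order.TTheory GRing.Theory Num.Theory.
Set Implicit Arguments. Unset Strict Implicit. Unset Printing Implicit Defensive.

Definition Sp := (nat * seq nat)%type.

Definition Enc (p t : nat) (s : seq nat) : seq nat :=
  if t < p - 1 then t :: s else if s is h :: tl then (h + (p - 1)) :: tl else [::].

Definition fm (p n : nat) (z : Sp) : Sp :=
  let: (m, s) := z in
  if m < n then (m, s) else if m < n + p then (n, Enc p (m - n) s) else (m - (p - 1), s).

Definition gm (p n : nat) (z : Sp) : Sp :=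
  let: (m, s) := z in
  if m < n then (m, s) else if m == n then
    (if s is h :: tl then (if h < p - 1 then (n + h, tl) else (n + (p - 1), (h - (p - 1)) :: tl))
     else (n + (p - 1), [::]))
  else (m + (p - 1), s).

Ltac bsolve := repeat (case: ifP => [?|/negbT ?] /=);
  try (by exfalso; lia); try (by congr pair; lia); try (by congr (_, _ :: _); lia).

Lemma gm_fm p n : (1 < p)%N -> cancel (fm p n) (gm p n).
Proof.
move=> hp [m s]; rewrite /fm /gm /Enc; case: s => [|h tl]; bsolve.
Qed.

Lemma fm_gm p n : (1 < p)%N -> cancel (gm p n) (fm p n).
Proof.
move=> hp [m s]; rewrite /fm /gm /Enc; case: s => [|h tl]; bsolve.
Qed.

Lemma fm_rel p k n : (1 < p)%N -> (k < n)%N ->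
  forall z, fm p n (fm p k z) = fm p k (fm p (n + p - 1) z).
Proof.
move=> hp hkn [m s]; rewrite /fm /Enc; case: s => [|h tl]; bsolve.
Qed.

Definition bijT := {fg : (Sp -> Sp) * (Sp -> Sp) | cancel fg.1 fg.2 /\ cancel fg.2 fg.1}.

Lemma bij_eq (a b : bijT) :
  (forall z, (sval a).1 z = (sval b).1 z) -> (forall z, (sval a).2 z = (sval b).2 z) -> a = b.
Proof.
case: a b => [[f1 g1] H1] [[f2 g2] H2] /= e1 e2.
have E1 := functional_extensionality _ _ e1.
have E2 := functional_extensionality _ _ e2.
subst; congr exist; exact: proof_irrelevance.
Qed.

Definition bmul (a b : bijT) : bijT.
Proof.
exists ((sval a).1 \o (sval b).1, (sval b).2 \o (sval a).2).
case: a b => [[f1 g1] [c1 d1]] [[f2 g2] [c2 d2]] /=.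
move: c1 c2 d1 d2; rewrite /cancel /= => c1 c2 d1 d2.
by split=> z /=; [rewrite c1 c2 | rewrite d2 d1].
Defined.

Definition binv (a : bijT) : bijT.
Proof.
exists ((sval a).2, (sval a).1).
by case: a => [[f g] [c d]] /=; split.
Defined.

Definition bone : bijT.
Proof. by exists (id, id). Defined.

Lemma bmulA a b c : bmul a (bmul b c) = bmul (bmul a b) c.
Proof. by apply: bij_eq. Qed.
Lemma bmul1 a : bmul bone a = a.
Proof. by apply: bij_eq. Qed.
Lemma bmulV a : bmul (binv a) a = bone.
Proof.
apply: bij_eq => z; case: a => [[f g] [c d]]; move: c d; rewrite /cancel /= => c d;
  exact: c.
Qed.

Definition BG : group := @Pilot.Defs.Group bijT bmul binv bone bmulA bmul1 bmulV.

Definition xm (p : nat) (hp : (1 < p)%N) (n : nat) : BG.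
Proof. exists (fm p n, gm p n); split; [exact: gm_fm | exact: fm_gm]. Defined.

Lemma xm_rel p (hp : (1 < p)%N) : Fp_rel p (xm hp).
Proof.
move=> k n hkn; apply: bij_eq => z /=; first exact: fm_rel.
have H : forall y y', fm p n (fm p k y) = fm p n (fm p k y') -> y = y'.
  by move=> y y' /(can_inj (gm_fm n hp)) /(can_inj (gm_fm k hp)).
apply: H; rewrite [in LHS]fm_gm // [in LHS]fm_gm // fm_rel // !fm_gm //.
Qed.

Definition evinv (p : nat) (c : seq nat) : Sp -> Sp := foldr (fun a h => h \o gm p a) id c.

Lemma geval_pos p (hp : (1 < p)%N) c z :
  (sval (geval (xm hp) (map (fun a => (a, true)) c))).2 z = evinv p c z.
Proof. by elim: c z => [//|a c IH] z /=; rewrite -IH. Qed.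

Lemma evinv_nil p c z : z.2 = [::] -> (evinv p c z).2 = [::].
Proof.
elim: c z => [//|a c IH] [m s] /= ->; apply: IH.
by rewrite /gm; case: ifP => //; case: ifP.
Qed.

Lemma evinv_cons p a c z : evinv p (a :: c) z = evinv p c (gm p a z).
Proof. by []. Qed.

Definition Nrel (p : nat) : rel nat := fun a b => (b <= a + p - 1)%N.

Lemma evinv_top p c r : (1 < p)%N -> sorted (Nrel p) c ->
  (if c is a :: _ then (a < r)%N else true) -> (evinv p c (r, [:: 0%N])).2 != [::].
Proof.
move=> hp; elim: c r => [//|a c IH] r hs har; rewrite evinv_cons.
have -> : gm p a (r, [:: 0%N]) = (r + (p - 1), [:: 0%N]).
  rewrite /gm (_ : (r < a) = false); last lia.
  by rewrite (_ : (r == a) = false) //; lia.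
apply: IH; first exact: path_sorted hs.
by case: c hs => //= b c /andP [hb _]; rewrite /Nrel in hb; lia.
Qed.

Lemma evinv_head p a c : (1 < p)%N -> (evinv p (a :: c) (a, [:: 0%N])).2 = [::].
Proof.
move=> hp; rewrite evinv_cons; apply: evinv_nil.
by rewrite /gm ltnn eqxx (_ : (0 < p - 1)%N = true) //; lia.
Qed.

Lemma evinv_uniq p c1 c2 : (1 < p)%N -> sorted (Nrel p) c1 -> sorted (Nrel p) c2 ->
  (forall z, evinv p c1 z = evinv p c2 z) -> c1 = c2.
Proof.
move=> hp; elim: c1 c2 => [|a c1 IH] [|b c2] // h1 h2 he.
- by move: (he (b, [:: 0%N])); move/(congr1 snd); rewrite evinv_head.
- by move: (he (a, [:: 0%N])); move/(congr1 snd); rewrite evinv_head.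
have eab : a = b.
  case: (ltngtP a b) => // hab.
  - have := evinv_top (c := a :: c1) (r := b) hp h1 hab.
    by rewrite he evinv_head.
  - have := evinv_top (c := b :: c2) (r := a) hp h2 hab.
    by rewrite -he evinv_head.
subst b; congr cons; apply: IH; [exact: path_sorted h1 | exact: path_sorted h2 |].
move=> z; have := he (fm p a z); rewrite !evinv_cons gm_fm //.
Qed.
Lemma gmulVr (G : group) (x : G) : gmul x (ginv x) = gone G.
Proof.
rewrite -[LHS]gmul1 -[in X in gmul X _](gmulV (ginv x)) -gmulA.
by rewrite [gmul (ginv x) (gmul x (ginv x))]gmulA gmulV gmul1 gmulV.
Qed.

Lemma gmul1r (G : group) (x : G) : gmul x (gone G) = x.
Proof. by rewrite -(gmulV x) gmulA gmulVr gmul1. Qed.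

Lemma ginv_uniq (G : group) (y z : G) : gmul y z = gone G -> y = ginv z.
Proof. by move=> h; rewrite -[y]gmul1r -(gmulVr z) gmulA h gmul1. Qed.

Lemma ginvM (G : group) (a b : G) : ginv (gmul a b) = gmul (ginv b) (ginv a).
Proof.
symmetry; apply: ginv_uniq.
by rewrite -gmulA [gmul (ginv a) _]gmulA gmulV gmul1 gmulV.
Qed.

Lemma grel1 (G : group) (A B C D : G) :
  gmul A B = gmul C D -> gmul (ginv A) C = gmul B (ginv D).
Proof.
move=> h; rewrite -[gmul (ginv A) C]gmul1r -(gmulVr D) !gmulA -[gmul (gmul _ C) D]gmulA.
by rewrite -h gmulA gmulV gmul1.
Qed.

Lemma grel2 (G : group) (A B C D : G) :
  gmul A B = gmul C D -> gmul (ginv B) (ginv A) = gmul (ginv D) (ginv C).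
Proof. by move=> h; rewrite -!ginvM h. Qed.

Lemma geval_cat (G : group) (x : nat -> G) s1 s2 :
  geval x (s1 ++ s2) = gmul (geval x s1) (geval x s2).
Proof.
elim: s1 => [|a s1 IH] /=; first by rewrite gmul1.
by rewrite IH gmulA.
Qed.

Lemma geval_swap (G : group) (x : nat -> G) s1 s2 a b a' b' :
  gmul (gletter x a) (gletter x b) = gmul (gletter x a') (gletter x b') ->
  geval x (s1 ++ a :: b :: s2) = geval x (s1 ++ a' :: b' :: s2).
Proof.
by move=> h; rewrite !geval_cat /= [gmul (gletter x a) _]gmulA [gmul (gletter x a') _]gmulA h.
Qed.

Lemma untrack_swap s1 s2 (a b : tletter) :
  untrack (s1 ++ a :: b :: s2) = untrack s1 ++ a.1 :: b.1 :: untrack s2.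
Proof. by rewrite /untrack map_cat. Qed.

Lemma geval_rstep1 p (G : group) (x : nat -> G) w w' :
  Fp_rel p x -> rstep1 p w w' -> geval x (untrack w) = geval x (untrack w').
Proof.
move=> hr hs; case: hs => [s1 s2 a b oa ob h|s1 s2 a b oa ob h|s1 s2 a oa ob];
  rewrite !untrack_swap; apply: geval_swap; rewrite /gletter /=.
- exact: grel1 (hr _ _ h).
- exact: grel1 (esym (hr _ _ h)).
- by rewrite gmulV gmulVr.
Qed.

Lemma geval_rstep2 p (G : group) (x : nat -> G) w w' :
  (1 <= p)%N -> Fp_rel p x -> rstep2 p w w' -> geval x (untrack w) = geval x (untrack w').
Proof.
move=> hp hr hs; case: hs => [s1 s2 a b oa ob h|s1 s2 a b oa ob h];
  rewrite !untrack_swap; apply: geval_swap; rewrite /gletter /=.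
- have := hr a (b - p + 1) ltac:(lia).
  by have -> : (b - p + 1 + p - 1 = b)%N by lia.
- symmetry; apply: grel2.
  have := hr b (a - p + 1) ltac:(lia).
  by have -> : (a - p + 1 + p - 1 = a)%N by lia.
Qed.

Lemma star_inv (T : Type) (R : T -> T -> Prop) (I : T -> Prop) x y :
  star R x y -> I x -> (forall a b, R a b -> I a -> I b) -> I y.
Proof. by elim=> [//|a b c hab _ IH] Ia hI; apply: IH => //; apply: hI Ia. Qed.
Definition ZG : group := @Pilot.Defs.Group int (fun a b => (a + b)%R) (fun a => (- a)%R) 0%R
  (@addrA _) (@add0r _) (@addNr _).

Lemma geval_ZG (i : nat -> nat) (eps : nat -> bool) s :
  geval (fun _ => (1%R : ZG)) [seq (i l, eps l) | l <- s] =
  ((count eps s)%:Z - (count (predC eps) s)%:Z)%R.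
Proof.
elim: s => [//|a s IH] /=; rewrite IH /gletter /=.
by case: (eps a) => /=; lia.
Qed.

Lemma even_count p d (i : nat -> nat) (eps : nat -> bool) :
  eval_trivial p (word d i eps) -> count eps (iota 1 d) = count (predC eps) (iota 1 d).
Proof.
move=> H; have := H ZG (fun _ => 1%R) (fun _ _ _ => erefl).
rewrite /word geval_ZG /= => /eqP; rewrite subr_eq0 => /eqP; lia.
Qed.

Fixpoint allpos (Q : tletter -> nat -> Prop) (off : nat) (w : seq tletter) : Prop :=
  if w is t :: w' then Q t off /\ allpos Q off.+1 w' else True.

Lemma allpos_cat Q off s1 s2 :
  allpos Q off (s1 ++ s2) <-> allpos Q off s1 /\ allpos Q (off + size s1) s2.
Proof.
elim: s1 off => [|t s1 IH] off /=; first by rewrite addn0; tauto.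
rewrite IH addSnnS; tauto.
Qed.

Lemma allpos_nth Q off w d0 : allpos Q off w -> forall q, (q < size w)%N -> Q (nth d0 w q) (off + q).
Proof.
elim: w off => [//|t w IH] off /= [h1 h2] [|q] hq /=; first by rewrite addn0.
by rewrite -addSnnS; apply: IH.
Qed.

Definition Q1 (p : nat) (i : nat -> nat) (t : tletter) (q : nat) : Prop :=
  (i t.2 <= t.1.1)%N /\
  (if t.1.2 then (t.1.1 + (p - 1) * q <= i t.2 + (p - 1) * (t.2 - 1))%N
   else (t.1.1 + (p - 1) * (t.2 - 1) <= i t.2 + (p - 1) * q)%N).

Lemma Q1_init p d (i : nat -> nat) (eps : nat -> bool) off :
  allpos (Q1 p i) off [seq (i l, eps l, l) | l <- iota off.+1 d].
Proof.
elim: d off => [//|d IH] off /=; split; last exact: IH.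
rewrite /Q1 /=; split => //; case: (eps _); rewrite subSS subn0 //.
Qed.

Lemma Q1_step p (i : nat -> nat) w w' : (1 <= p)%N ->
  rstep1 p w w' -> allpos (Q1 p i) 0 w -> allpos (Q1 p i) 0 w'.
Proof.
move=> hp; case=> [s1 s2 a b oa ob h|s1 s2 a b oa ob h|s1 s2 a oa ob];
  rewrite !allpos_cat /= /Q1 /= => -[h1 [[ha1 ha2] [[hb1 hb2] h3]]];
  (split; [exact: h1 | split; [split | split; [split | exact: h3]]]);
  rewrite ?mulnS in hb2 ha2 *; nia.
Qed.

Definition posorig (w : seq tletter) := [seq t.2 | t <- w & t.1.2].
Definition negorig (w : seq tletter) := [seq t.2 | t <- w & ~~ t.1.2].

Lemma orig_step p w w' : rstep1 p w w' -> posorig w = posorig w' /\ negorig w = negorig w'.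
Proof.
by case=> [s1 s2 a b oa ob h|s1 s2 a b oa ob h|s1 s2 a oa ob];
  rewrite /posorig /negorig !filter_cat !map_cat.
Qed.

Lemma posorig_tword d (i : nat -> nat) (eps : nat -> bool) :
  posorig (tword d i eps) = [seq l <- iota 1 d | eps l].
Proof.
rewrite /posorig /tword; elim: (iota 1 d) => [//|a s IH] /=.
by case: (eps a) => /=; rewrite IH.
Qed.

Lemma negorig_tword d (i : nat -> nat) (eps : nat -> bool) :
  negorig (tword d i eps) = [seq l <- iota 1 d | ~~ eps l].
Proof.
rewrite /negorig /tword; elim: (iota 1 d) => [//|a s IH] /=.
by case: (eps a) => /=; rewrite IH.
Qed.

Lemma nth_filter_iota1 (a : pred nat) b n q :
  (q < size (filter a (iota b n)))%N ->
  (nth 0 (filter a (iota b n)) q - b - q <= count (predC a) (iota b n))%N.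
Proof.
elim: n b q => [//|n IH] b q /=.
case: (boolP (a b)) => hab /=.
- case: q => [|q] /=; first lia.
  move=> /(IH b.+1) h; lia.
- move=> /(IH b.+1) h; lia.
Qed.

Lemma nth_filter_iota2 (a : pred nat) b n q :
  (q < size (filter a (iota b n)))%N -> (b + q <= nth 0 (filter a (iota b n)) q)%N.
Proof.
elim: n b q => [//|n IH] b q /=.
case: (boolP (a b)) => hab /=.
- case: q => [|q] /=; first lia.
  move=> /(IH b.+1) h; lia.
- move=> /(IH b.+1) h; lia.
Qed.
Definition lam (p c q : nat) : nat := if (q <= c)%N then q else (q + (p - 1))%N.

Lemma lam_comm p c e n : (e + p <= c)%N -> (1 <= p)%N ->
  lam p c (lam p e n) = lam p e (lam p (c - p + 1) n).
Proof.
move=> h hp; rewrite /lam.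
case: (leqP n e) => h1; case: (leqP n (c - p + 1)) => h2 /=;
  repeat (case: ifP => [?|/negbT ?] /=); lia.
Qed.

Definition Lpos p (suf : seq tletter) (n : nat) : nat :=
  foldl (fun q y => if y.1.2 then lam p y.1.1 q else q) n suf.
Definition Lneg p (pre : seq tletter) (n : nat) : nat :=
  foldr (fun y q => if y.1.2 then q else lam p y.1.1 q) n pre.

Fixpoint Ltrip p (pre w : seq tletter) : seq (nat * nat * nat) :=
  if w is t :: w' then
    (t.2, (if t.1.2 then Lpos p w' t.1.1 else Lneg p pre t.1.1), t.1.1) :: Ltrip p (rcons pre t) w'
  else [::].

Definition LR (old new : seq (nat * nat * nat)) : Prop :=
  forall e', e' \in new -> exists2 e, e \in old & e'.1 = e.1 /\ (e'.2 <= e.2)%N.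

Lemma LR_refl l : LR l l.
Proof. by move=> e he; exists e. Qed.

Lemma LR_cons e l l' : LR l l' -> LR (e :: l) (e :: l').
Proof.
move=> h e'; rewrite inE => /orP [/eqP ->|/h [e2 he2 h2]]; first by exists e; rewrite ?mem_head.
by exists e2; rewrite // inE he2 orbT.
Qed.

Lemma Lneg_rcons p pre t n : Lneg p (rcons pre t) n = Lneg p pre (if t.1.2 then n else lam p t.1.1 n).
Proof. by rewrite /Lneg foldr_rcons. Qed.

Lemma Ltrip_ext p pre1 pre2 w : (forall n, Lneg p pre1 n = Lneg p pre2 n) ->
  Ltrip p pre1 w = Ltrip p pre2 w.
Proof.
elim: w pre1 pre2 => [//|t w IH] pre1 pre2 h /=; rewrite h; congr cons; apply: IH.
by move=> n; rewrite !Lneg_rcons.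
Qed.

Lemma Ltrip_ctx p r r' :
  (forall n, Lpos p r n = Lpos p r' n) -> (forall pre, LR (Ltrip p pre r) (Ltrip p pre r')) ->
  forall s1 pre, LR (Ltrip p pre (s1 ++ r)) (Ltrip p pre (s1 ++ r')).
Proof.
move=> hA hB; elim=> [//|t s1 IH] pre /=.
have -> : Lpos p (s1 ++ r) t.1.1 = Lpos p (s1 ++ r') t.1.1 by rewrite /Lpos !foldl_cat; apply: hA.
exact: LR_cons.
Qed.

Lemma LR_step p w w' : (1 <= p)%N -> rstep2 p w w' -> LR (Ltrip p [::] w) (Ltrip p [::] w').
Proof.
move=> hp; case=> [s1 s2 a b oa ob h|s1 s2 a b oa ob h]; apply: Ltrip_ctx.
- by move=> n /=; rewrite lam_comm //; lia.
- move=> pre /=.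
  have -> : Lpos p s2 (lam p b a) = Lpos p s2 a by rewrite /lam (_ : (a <= b)%N) //; lia.
  have -> : Lpos p s2 (lam p a (b - p + 1)) = Lpos p s2 b.
    by rewrite /lam (_ : (b - p + 1 <= a)%N = false) //; [congr Lpos; lia | lia].
  rewrite (@Ltrip_ext p (rcons (rcons pre (b - p + 1, true, ob)) (a, true, oa))
                        (rcons (rcons pre (a, true, oa)) (b, true, ob))); last by move=> n; rewrite !Lneg_rcons.
  move=> e'; rewrite !inE => /or3P [/eqP ->|/eqP ->|he].
  + by exists (ob, Lpos p s2 b, b); rewrite ?inE ?eqxx ?orbT //= ; split => //; lia.
  + by exists (oa, Lpos p s2 a, a); rewrite ?inE ?eqxx ?orbT.
  + by exists e'; rewrite ?inE ?he ?orbT.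
- by [].
- move=> pre /=.
  rewrite !Lneg_rcons /=.
  have -> : lam p a b = b by rewrite /lam (_ : (b <= a)%N) //; lia.
  have -> : Lneg p pre (lam p b (a - p + 1)) = Lneg p pre a.
    by rewrite /lam (_ : (a - p + 1 <= b)%N = false) //; [congr Lneg; lia | lia].
  rewrite (@Ltrip_ext p (rcons (rcons pre (b, false, ob)) (a - p + 1, false, oa))
                        (rcons (rcons pre (a, false, oa)) (b, false, ob))); last first.
    by move=> n; rewrite !Lneg_rcons /=; congr Lneg; symmetry; apply: lam_comm; lia.
  move=> e'; rewrite !inE => /or3P [/eqP ->|/eqP ->|he].
  + by exists (ob, Lneg p pre b, b); rewrite ?inE ?eqxx ?orbT.
  + by exists (oa, Lneg p pre a, a); rewrite ?inE ?eqxx ?orbT //=; split => //; lia.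
  + by exists e'; rewrite ?inE ?he ?orbT.
Qed.

Lemma lam_ge p c q : (q <= lam p c q)%N.
Proof. rewrite /lam; case: ifP => _; lia. Qed.

Lemma lam_le p c q : (lam p c q <= q + (p - 1))%N.
Proof. rewrite /lam; case: ifP => _; lia. Qed.

Lemma Lpos_ge p suf n : (n <= Lpos p suf n)%N.
Proof.
elim: suf n => [//|y suf IH] n /=.
apply: leq_trans (IH _); case: ifP => _ //; exact: lam_ge.
Qed.

Lemma Lneg_ge p pre n : (n <= Lneg p pre n)%N.
Proof.
elim: pre => [//|y pre IH] /=.
case: ifP => _ //; apply: leq_trans IH (lam_ge _ _ _).
Qed.

Lemma Lpos_le p suf n : (Lpos p suf n <= n + (p - 1) * count (fun y : tletter => y.1.2) suf)%N.
Proof.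
elim: suf n => [|y suf IH] n /=; first lia.
case: ifP => _ /=.
- apply: leq_trans (IH _) _; have := lam_le p y.1.1 n; nia.
- by rewrite add0n.
Qed.

Lemma Lneg_le p pre n : (Lneg p pre n <= n + (p - 1) * count (fun y : tletter => ~~ y.1.2) pre)%N.
Proof.
elim: pre => [|y pre IH] /=; first lia.
case: ifP => _ /=; first by rewrite add0n.
have := lam_le p y.1.1 (Lneg p pre n); nia.
Qed.

Lemma Ltrip_base p pre w : forall e, e \in Ltrip p pre w ->
  exists2 t, t \in w & t.2 = e.1.1 /\ e.2 = t.1.1 /\ (t.1.1 <= e.1.2)%N.
Proof.
elim: w pre => [//|t w IH] pre e /=; rewrite inE => /orP [/eqP ->|/IH [t' ht' h']].
- exists t; rewrite ?mem_head //=; split=> //; split=> //.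
  by case: ifP => _; [apply: Lpos_ge | apply: Lneg_ge].
- by exists t'; rewrite // inE ht' orbT.
Qed.

Lemma Ltrip_top p pre w : forall t, t \in w ->
  exists2 e, e \in Ltrip p pre w & e.1.1 = t.2 /\ e.2 = t.1.1 /\
    (e.1.2 <= t.1.1 + (p - 1) * (if t.1.2 then count (fun y : tletter => y.1.2) w
                                else count (fun y : tletter => ~~ y.1.2) (pre ++ w)))%N.
Proof.
elim: w pre => [//|t w IH] pre t0 /=; rewrite inE => /orP [/eqP ->|/(IH (rcons pre t)) [e he h']].
- exists (t.2, (if t.1.2 then Lpos p w t.1.1 else Lneg p pre t.1.1), t.1.1); rewrite ?mem_head //=.
  split=> //; split=> //; case: ifP => hs.
  + apply: leq_trans (Lpos_le _ _ _) _; nia.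
  + apply: leq_trans (Lneg_le _ _ _) _; rewrite count_cat /=; nia.
- exists e; rewrite ?inE ?he ?orbT //.
  case: h' => h1 [h2 h3]; split=> //; split=> //; apply: leq_trans h3 _.
  case: ifP => hs; last by rewrite cat_rcons.
  by rewrite leq_add2l leq_mul2l /= leq_addl orbT.
Qed.
Lemma irr1_cons p (t : tletter) w : irreducible (rstep1 p) (t :: w) -> irreducible (rstep1 p) w.
Proof.
move=> H w' hs; case: hs H => [s1 s2 a b oa ob h|s1 s2 a b oa ob h|s1 s2 a oa ob] H.
- exact: (H _ (R1gt p (t :: s1) s2 oa ob h)).
- exact: (H _ (R1lt p (t :: s1) s2 oa ob h)).
- exact: (H _ (R1eq p (t :: s1) s2 a oa ob)).
Qed.

Lemma irr1_head p (x y : tletter) w : irreducible (rstep1 p) (x :: y :: w) -> x.1.2 || ~~ y.1.2.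
Proof.
case: x y => [[a [] oa]] [[b [] ob]] //= H.
case: (ltngtP a b) => h.
- by case: (H _ (R1lt p [::] w oa ob h)).
- by case: (H _ (R1gt p [::] w oa ob h)).
- by subst; case: (H _ (R1eq p [::] w b oa ob)).
Qed.

Lemma irr1_allneg p (x : tletter) w : irreducible (rstep1 p) (x :: w) -> ~~ x.1.2 ->
  all (fun t : tletter => ~~ t.1.2) w.
Proof.
elim: w x => [//|y w IH] x H hx /=.
have hy : ~~ y.1.2 by have := irr1_head H; rewrite (negbTE hx).
by rewrite hy /=; apply: IH hy; apply: irr1_cons H.
Qed.

Lemma irr1_split p u : irreducible (rstep1 p) u ->
  u = [seq t <- u | t.1.2] ++ [seq t <- u | ~~ t.1.2].
Proof.
elim: u => [//|x u IH] H /=.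
case: (boolP x.1.2) => hx /=.
- by rewrite -IH //; apply: irr1_cons H.
- have ha := irr1_allneg H hx.
  have -> : [seq t <- u | t.1.2] = [::].
    by elim: u {IH H} ha => [//|y u IHu] /= /andP [/negbTE -> /IHu].
  by rewrite (all_filterP ha).
Qed.

Lemma irr2_cons p (t : tletter) w : irreducible (rstep2 p) (t :: w) -> irreducible (rstep2 p) w.
Proof.
move=> H w' hs; case: hs H => [s1 s2 a b oa ob h|s1 s2 a b oa ob h] H.
- exact: (H _ (R2pos (t :: s1) s2 oa ob h)).
- exact: (H _ (R2neg (t :: s1) s2 oa ob h)).
Qed.

Definition R2ok (p : nat) (x y : tletter) : bool :=
  (x.1.2 && y.1.2 ==> (y.1.1 <= x.1.1 + p - 1)%N) &&
  (~~ x.1.2 && ~~ y.1.2 ==> (x.1.1 <= y.1.1 + p - 1)%N).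

Lemma irr2_head p (x y : tletter) w : irreducible (rstep2 p) (x :: y :: w) -> R2ok p x y.
Proof.
case: x y => [[a [] oa]] [[b [] ob]] H; rewrite /R2ok //=.
- case: leqP => // h; by case: (H _ (R2pos [::] w oa ob h)).
- case: leqP => // h; by case: (H _ (R2neg [::] w oa ob h)).
Qed.

Lemma irr2_sorted p w : irreducible (rstep2 p) w -> sorted (R2ok p) w.
Proof.
elim: w => [//|x w IH] H /=.
case: w IH H => [//|y w] IH H /=.
rewrite (irr2_head H) /=; exact: (IH (irr2_cons H)).
Qed.

Lemma sign_step2 p w w' : rstep2 p w w' ->
  [seq t.1.2 | t <- w] = [seq t.1.2 | t <- w'].
Proof. by case=> *; rewrite !map_cat. Qed.

Lemma geval_negpos (G : group) (x : nat -> G) es :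
  gmul (geval x [seq (a, false) | a <- es]) (geval x [seq (a, true) | a <- rev es]) = gone G.
Proof.
elim: es => [|e es IH] /=; first by rewrite gmul1.
rewrite rev_cons -cats1 map_cat geval_cat /= /gletter /= gmul1r.
by rewrite -gmulA [gmul (geval _ _) (gmul _ _)]gmulA IH gmul1 gmulV.
Qed.

Lemma geval_palin (G : group) (x : nat -> G) c es :
  geval x ([seq (a, true) | a <- c] ++ [seq (a, false) | a <- es]) = gone G ->
  geval x [seq (a, true) | a <- c] = geval x [seq (a, true) | a <- rev es].
Proof.
rewrite geval_cat => h.
by rewrite -[LHS]gmul1r -(geval_negpos x es) gmulA h gmul1.
Qed.

Lemma word_untrack d (i : nat -> nat) (eps : nat -> bool) : word d i eps = untrack (tword d i eps).
Proof. by rewrite /word /untrack /tword -map_comp. Qed.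

Lemma prefix_sorted (T : Type) (r : rel T) s1 s2 : sorted r (s1 ++ s2) -> sorted r s1.
Proof. by case: s1 => //= x s1; rewrite cat_path => /andP []. Qed.

Lemma suffix_sorted (T : Type) (r : rel T) s1 s2 : sorted r (s1 ++ s2) -> sorted r s2.
Proof.
case: s1 => //= x s1; rewrite cat_path => /andP [_]; exact: path_sorted.
Qed.

Lemma map_fst_pos (s : seq tletter) : all (fun t : tletter => t.1.2) s ->
  [seq t.1 | t <- s] = [seq (a, true) | a <- [seq t.1.1 | t <- s]].
Proof. by elim: s => [//|[[a b] o] s IH] /= /andP [hb /IH ->]; rewrite hb. Qed.

Lemma map_fst_neg (s : seq tletter) : all (fun t : tletter => ~~ t.1.2) s ->
  [seq t.1 | t <- s] = [seq (a, false) | a <- [seq t.1.1 | t <- s]].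
Proof. by elim: s => [//|[[a b] o] s IH] /= /andP [hb /IH ->]; rewrite (negbTE hb). Qed.

Lemma map_iota1 (T : Type) (f : nat -> T) (c : seq nat) :
  [seq f (nth 0 c l.-1) | l <- iota 1 (size c)] = map f c.
Proof.
rewrite (iotaDl 1 0) -map_comp.
rewrite (eq_map (g := fun l => f (nth 0 c l))) //.
by rewrite (map_comp f (nth 0 c)) -/(mkseq _ _) mkseq_nth.
Qed.

Lemma u_bound p d (i : nat -> nat) (eps : nat -> bool) u K :
  allpos (Q1 p i) 0 u ->
  posorig u = [seq l <- iota 1 d | eps l] -> negorig u = [seq l <- iota 1 d | ~~ eps l] ->
  u = [seq t <- u | t.1.2] ++ [seq t <- u | ~~ t.1.2] ->
  count eps (iota 1 d) = K -> count (predC eps) (iota 1 d) = K ->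
  forall t0, t0 \in u -> (i t0.2 <= t0.1.1 <= i t0.2 + (p - 1) * K)%N.
Proof.
move=> hQ hpo hno hsp hK1 hK2 [[n sg] o] ht0.
set t0 := (n, sg, o) in ht0 *.
set d0 : tletter := (0, true, 0)%N.
have hq : (index t0 u < size u)%N by rewrite index_mem.
have := allpos_nth d0 hQ hq; rewrite nth_index // add0n /Q1 => -[h1 h2].
rewrite h1 /=.
have hsP : size [seq t <- u | t.1.2] = K.
  by rewrite -hK1 -size_filter -hpo /posorig size_map.
have hsN : size [seq t <- u | ~~ t.1.2] = K.
  have -> : K = count (fun l => ~~ eps l) (iota 1 d) by rewrite -hK2.
  by rewrite -size_filter -hno /negorig size_map.
move: hq h2; set q := index t0 u => hq h2.
have hnt : nth d0 u q = t0 by rewrite nth_index.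
clearbody q.
case: (ltnP q K) => hqK.
- have e1 : nth d0 [seq t <- u | t.1.2] q = t0 by rewrite -hnt [in RHS]hsp nth_cat hsP hqK.
  have hs : t0.1.2.
    by have := mem_nth d0 (_ : q < size [seq t <- u | t.1.2])%N; rewrite e1 hsP mem_filter => /(_ hqK) /andP [].
  rewrite hs in h2.
  have ho : t0.2 = nth 0 [seq l <- iota 1 d | eps l] q.
    by rewrite -hpo /posorig (nth_map d0) ?e1 // hsP.
  have hqs : (q < size [seq l <- iota 1 d | eps l])%N by rewrite size_filter hK1.
  have := nth_filter_iota1 hqs; rewrite -ho -/(predC eps) hK2 => h3.
  have : ((p - 1) * (t0.2 - 1) <= (p - 1) * q + (p - 1) * K)%N.
    by rewrite -mulnDr leq_mul2l; apply/orP; right; lia.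
  move: h2 h3; rewrite /t0 /=; lia.
- have hqN : (q - K < K)%N by move: hq; rewrite hsp size_cat hsP hsN; lia.
  have e1 : nth d0 [seq t <- u | ~~ t.1.2] (q - K) = t0.
    by rewrite -hnt [in RHS]hsp nth_cat hsP ltnNge hqK.
  have hs : ~~ t0.1.2.
    by have := mem_nth d0 (_ : q - K < size [seq t <- u | ~~ t.1.2])%N; rewrite e1 hsN mem_filter => /(_ hqN) /andP [].
  rewrite (negbTE hs) in h2.
  have ho : t0.2 = nth 0 [seq l <- iota 1 d | ~~ eps l] (q - K).
    by rewrite -hno /negorig (nth_map d0) ?e1 // hsN.
  have hqs : (q - K < size [seq l <- iota 1 d | ~~ eps l])%N.
    by rewrite -hno /negorig size_map hsN.
  have := nth_filter_iota2 hqs; rewrite -ho => h3.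
  have : ((p - 1) * q <= (p - 1) * (t0.2 - 1) + (p - 1) * K)%N.
    by rewrite -mulnDr leq_mul2l; apply/orP; right; lia.
  move: h2 h3; rewrite /t0 /=; lia.
Qed.

Lemma arith1 (n n0 L in0 X : nat) : (n <= n0)%N -> (n0 <= L)%N -> (L <= n + X)%N ->
  (in0 <= n0)%N -> (n0 <= in0 + X)%N -> (in0 <= n + X)%N /\ (n <= in0 + X)%N.
Proof. lia. Qed.

Lemma arith2 (a b X : nat) : (b <= a + X)%N -> (a <= b + X)%N ->
  (- (X%:Z) <= a%:Z - b%:Z <= X%:Z)%R.
Proof. move=> h1 h2; apply/andP; split; lia. Qed.

Lemma arith3 (a o1 o2 X : nat) : (o1 <= a + X)%N -> (a <= o1 + X)%N ->
  (o2 <= a + X)%N -> (a <= o2 + X)%N -> (`|o1%:Z - o2%:Z| <= (X + X)%:Z)%R.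
Proof. move=> h1 h2 h3 h4; rewrite ler_norml; apply/andP; split; lia. Qed.

Unset Implicit Arguments.
Local Open Scope ring_scope.

Theorem mainTheorem5 (p d : nat) (i : nat -> nat) (eps : nat -> bool) :
  (2 <= p)%N ->
  eval_trivial p (word d i eps) ->
  ~~ odd d /\
  forall v : seq tletter, NF_run p (tword d i eps) v ->
    (exists j : nat -> nat,
       untrack v = [seq (j l, true) | l <- iota 1 (d %/ 2)] ++
                   [seq (j l, false) | l <- rev (iota 1 (d %/ 2))] /\
       (forall l, (1 <= l <= (d %/ 2).-1)%N -> (j l.+1 <= j l + p - 1)%N) /\
       (forall l, (1 <= l <= d %/ 2)%N ->
          - ((d * (p - 1)) %/ 2)%N%:Z <= (j l)%:Z - (i (tauinv v l))%:Z
          <= ((d * (p - 1)) %/ 2)%N%:Z)) /\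
    (forall k, (1 <= k <= d %/ 2)%N ->
       `|(i (tauinv v k))%:Z - (i (tauinv v (d - k + 1)))%:Z| <= (d * (p - 1))%:Z).
Proof.
move=> hp H.
have hp1 : (1 <= p)%N by lia.
set K := count eps (iota 1 d).
have hK2 : count (predC eps) (iota 1 d) = K by rewrite -(even_count H).
have hd : d = (K + K)%N by rewrite -{1}(size_iota 1 d) -(count_predC eps) hK2.
split; first by rewrite hd addnn odd_double.
move=> v [u [h1 [hirr1 [h2 hirr2]]]].
have hQ : allpos (Q1 p i) 0 u.
  apply: (star_inv (I := fun w => allpos (Q1 p i) 0 w) h1); first exact: (Q1_init p d i eps 0).
  by move=> a b hab; apply: Q1_step.
have [hpo hno] : posorig u = posorig (tword d i eps) /\ negorig u = negorig (tword d i eps).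
  apply: (star_inv (I := fun w => posorig w = posorig (tword d i eps) /\
                                  negorig w = negorig (tword d i eps)) h1) => //.
  by move=> a b hab [ea eb]; have [e1 e2] := orig_step hab; rewrite -e1 -e2.
rewrite posorig_tword in hpo; rewrite negorig_tword in hno.
have hsp := irr1_split hirr1.
have hub := u_bound hQ hpo hno hsp erefl hK2.
have hsP : size [seq t <- u | t.1.2] = K.
  by rewrite /K -size_filter -hpo /posorig size_map.
have hsN : size [seq t <- u | ~~ t.1.2] = K.
  have -> : K = count (fun l => ~~ eps l) (iota 1 d) by rewrite -hK2.
  by rewrite -size_filter -hno /negorig size_map.
have hsg : [seq t.1.2 | t <- v] = [seq t.1.2 | t <- u].
  apply: (star_inv (I := fun w => [seq t.1.2 | t <- w] = [seq t.1.2 | t <- u]) h2) => //.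
  by move=> a b hab ha; rewrite -(sign_step2 hab).
have hR : forall e, e \in Ltrip p [::] v ->
    exists2 t0, t0 \in u & t0.2 = e.1.1 /\ (e.2 <= t0.1.1 <= e.1.2)%N.
  apply: (star_inv (I := fun w => forall e, e \in Ltrip p [::] w ->
    exists2 t0, t0 \in u & t0.2 = e.1.1 /\ (e.2 <= t0.1.1 <= e.1.2)%N) h2).
  - move=> e /Ltrip_base [t ht [h1' [h2' h3']]]; exists t => //; split => //.
    by rewrite h2' leqnn h3'.
  - move=> a b hab Ia e' /(LR_step hp1 hab) [e he [he1 he2]].
    have [t0 ht0 [h01 /andP [h02 h03]]] := Ia e he.
    exists t0 => //; rewrite he1; split => //.
    by rewrite h03 andbT; exact: leq_trans he2 h02.
have hG : forall (G : group) (x : nat -> G), Fp_rel p x -> geval x (untrack v) = gone G.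
  move=> G x hx; rewrite -(H G x hx) word_untrack.
  have e1 : geval x (untrack u) = geval x (untrack (tword d i eps)).
    apply: (star_inv (I := fun w => geval x (untrack w) = geval x (untrack (tword d i eps))) h1) => //.
    by move=> a b hab ha; rewrite -(geval_rstep1 hx hab).
  rewrite -e1.
  apply: (star_inv (I := fun w => geval x (untrack w) = geval x (untrack u)) h2) => //.
  by move=> a b hab ha; rewrite -(geval_rstep2 hp1 hx hab).
have hsv : size v = (K + K)%N.
  by rewrite -(size_map (fun t : tletter => t.1.2)) hsg size_map hsp size_cat hsP hsN.
have hvP : all (fun t : tletter => t.1.2) (take K v).
  have : all id [seq t.1.2 | t <- take K v].
    by rewrite map_take hsg -map_take hsp take_size_cat ?hsP // all_map filter_all.
  by rewrite all_map.
have hvN : all (fun t : tletter => ~~ t.1.2) (drop K v).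
  have : all negb [seq t.1.2 | t <- drop K v].
    by rewrite map_drop hsg -map_drop hsp drop_size_cat ?hsP // all_map filter_all.
  by rewrite all_map.
set c := [seq t.1.1 | t <- take K v].
set es := [seq t.1.1 | t <- drop K v].
have huv : untrack v = [seq (a, true) | a <- c] ++ [seq (a, false) | a <- es].
  rewrite -map_fst_pos // -map_fst_neg // -map_cat cat_take_drop //.
have hsv2 := irr2_sorted hirr2.
have hcs : sorted (Nrel p) c.
  have hst : sorted (R2ok p) (take K v).
    by apply: (prefix_sorted (s2 := drop K v)); rewrite cat_take_drop.
  rewrite /c sorted_map; apply: (sub_in_sorted _ hvP hst) => x y hx hy.
  have hx' : x.1.2 := hx; have hy' : y.1.2 := hy.
  rewrite /R2ok /= /Nrel hx' hy' /= ?andbT; exact: id.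
have hes : sorted (Nrel p) (rev es).
  have hst : sorted (R2ok p) (drop K v).
    by apply: (suffix_sorted (s1 := take K v)); rewrite cat_take_drop.
  rewrite rev_sorted /es sorted_map; apply: (sub_in_sorted _ hvN hst) => x y hx hy.
  have hx' : ~~ x.1.2 := hx; have hy' : ~~ y.1.2 := hy.
  rewrite /R2ok /= /Nrel (negbTE hx') (negbTE hy') /= ?andbT; exact: id.
have hgv := hG _ _ (xm_rel hp).
rewrite huv in hgv.
have hce : c = rev es.
  apply: (evinv_uniq hp) => // z.
  have := geval_palin hgv => /(congr1 (fun g => (sval g).2 z)).
  by rewrite !geval_pos.
have hsc : size c = K by rewrite size_map size_take hsv; case: ifP => //; lia.
have hd2 : (d %/ 2 = K)%N by rewrite hd addnn -mul2n mulKn.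
have hdiv : ((d * (p - 1)) %/ 2 = K * (p - 1))%N.
  by rewrite hd addnn -mul2n -mulnA mulKn.
have hcntP : count (fun t : tletter => t.1.2) v = K.
  by rewrite -(count_map _ id) hsg count_map -size_filter hsP.
have hcntN : count (fun t : tletter => ~~ t.1.2) v = K.
  by rewrite -(count_map _ negb) hsg count_map -size_filter hsN.
have hV : forall t : tletter, t \in v ->
    (i t.2 <= t.1.1 + (p - 1) * K)%N /\ (t.1.1 <= i t.2 + (p - 1) * K)%N.
  move=> t ht; have [e he [he1 [he2 he3]]] := Ltrip_top p [::] ht.
  have [t0 ht0 [h01 /andP [h02 h03]]] := hR e he.
  have /andP [h04 h05] := hub t0 ht0.
  rewrite cat0s hcntP hcntN if_same in he3.
  rewrite he1 in h01; rewrite h01 in h04 h05; rewrite he2 in h02.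
  exact: (arith1 h02 h03 he3 h04 h05).
have hjv : forall l, (l < K)%N -> nth 0 c l = (nth (0, true, 0)%N v l).1.1.
  move=> l hl; rewrite /c (nth_map (0, true, 0)%N); first by rewrite nth_take.
  by rewrite size_take hsv; case: ifP => _; lia.
have hjv2 : forall l, (l < K)%N -> nth 0 es l = (nth (0, true, 0)%N v (K + l)).1.1.
  move=> l hl; rewrite /es (nth_map (0, true, 0)%N); first by rewrite nth_drop.
  by rewrite size_drop hsv; lia.
split.
- exists (fun l => nth 0 c l.-1); split; [|split].
  + rewrite hd2 huv; congr cat.
    * by have := map_iota1 (fun a => (a, true)) c; rewrite hsc.
    * rewrite map_rev; have := map_iota1 (fun a => (a, false)) c; rewrite hsc => ->.
      by rewrite -map_rev hce revK.
  + move=> l /andP [hl1 hl2]; rewrite hd2 in hl2.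
    move/(sortedP 0): hcs => hh.
    have := hh l.-1 ltac:(rewrite prednK ?hsc; lia); rewrite /Nrel prednK //; lia.
  + move=> l /andP [hl1 hl2]; rewrite hd2 in hl2; rewrite hdiv.
    have hl : (l.-1 < K)%N by lia.
    rewrite hjv // /tauinv.
    have hlv : (l.-1 < size v)%N by rewrite hsv; lia.
    have [hA hB] := hV _ (mem_nth (0, true, 0)%N hlv).
    rewrite mulnC; exact: arith2 hA hB.
- move=> k /andP [hk1 hk2]; rewrite hd2 in hk2.
  rewrite /tauinv (_ : (d - k + 1).-1 = d - k)%N; last by lia.
  set t1 := nth (0, true, 0)%N v k.-1.
  set t2 := nth (0, true, 0)%N v (d - k).
  have hk1v : (k.-1 < size v)%N by rewrite hsv; lia.
  have hk2v : (d - k < size v)%N by rewrite hsv; lia.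
  have [hA hB] := hV t1 (mem_nth _ hk1v).
  have [hC hD] := hV t2 (mem_nth _ hk2v).
  have e1 : t1.1.1 = nth 0 c k.-1 by rewrite hjv //; lia.
  have e2 : t2.1.1 = nth 0 c k.-1.
    rewrite /t2 (_ : (d - k = K + (K - k))%N); last by lia.
    rewrite -hjv2; last by lia.
    rewrite (_ : es = rev c); last by rewrite hce revK.
    rewrite nth_rev hsc; last by lia.
    congr nth; lia.
  rewrite e1 in hA hB; rewrite e2 in hC hD.
  rewrite hd addnn -mul2n -mulnA mul2n -addnn mulnC.
  exact: arith3 hA hB hC hD.
Qed.
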